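(* Let $T$ be a tree rooted at $r$, and let $Z$ be a set of vertices. Then: (a) If $\alpha(T)>\alpha(T-Z)$ and $r$ is $\alpha$-critical in $T$, then either (i) there exist two (possibly non-distinct) vertices $u,v\in Z\cap V(T)$ such that $\alpha(T)>\alpha(T-\{u,v\})$ and $r$ is $\alpha$-critical in $T-\{u,v\}$, or (ii) there exists a vertex $u\in Z\cap V(T)$ such that $\alpha(T)>\alpha(T-u)$ and $r$ is not $\alpha$-critical in $T-u$. (b) If $\alpha(T)=\alpha(T-Z)$ and $r$ is $\alpha$-critical in $T-Z$ but not in $T$, then there exists a vertex $u\in Z\cap V(T)$ such that $r$ is $\alpha$-critical in $T-u$.
   Context: $\alpha(H)$ is the independence number of a graph $H$. A vertex $v$ of $H$ is $\alpha$-critical in $H$ if it belongs to every maximum independent set of $H$, i.e. $\alpha(H) = 1+\alpha(H-v)$ (in particular $v\in V(H)$). $T-S$ denotes $T$ with the vertices of $S\cap V(T)$ and incident edges removed. *)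

(* Defs.v *)
(* A simple graph is a symmetric irreflexive relation [e] on a
   finite vertex type [V]; a (sub)graph such as a tree T, or T - S, is the
   subgraph induced by a vertex set [A : {set V}]. *)
From mathcomp Require Import all_boot.
Set Implicit Arguments. Unset Strict Implicit. Unset Printing Implicit Defensive.

Definition simple_graph (V : finType) (e : rel V) : Prop :=
  symmetric e /\ irreflexive e.

Definition induced (V : finType) (e : rel V) (A : {set V}) : rel V :=
  [rel x y | [&& x \in A, y \in A & e x y]].

Definition connected_on (V : finType) (e : rel V) (A : {set V}) : Prop :=
  forall x y, x \in A -> y \in A -> connect (induced e A) x y.

Definition acyclic_on (V : finType) (e : rel V) (A : {set V}) : Prop :=
  forall c : seq V, 3 <= size c -> ~ ucycle (induced e A) c.

Definition is_tree (V : finType) (e : rel V) (A : {set V}) : Prop :=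
  A != set0 /\ connected_on e A /\ acyclic_on e A.

Definition independent (V : finType) (e : rel V) (S : {set V}) : bool :=
  [forall x in S, forall y in S, ~~ e x y].

Definition alpha (V : finType) (e : rel V) (A : {set V}) : nat :=
  \max_(S : {set V} | (S \subset A) && independent e S) #|S|.

Definition alpha_critical (V : finType) (e : rel V) (A : {set V}) (v : V) : Prop :=
  v \in A /\ alpha e A = (alpha e (A :\ v)).+1.

(* Main.v *)
Require Import Defs.
From mathcomp Require Import all_boot zify.
Set Implicit Arguments. Unset Strict Implicit. Unset Printing Implicit Defensive.


Section G.
Variable (V : finType) (e : rel V).
Hypothesis esym : symmetric e.
Hypothesis eirr : irreflexive e.

Lemma alpha_ge (A S : {set V}) : S \subset A -> independent e S -> #|S| <= alpha e A.
Proof. by move=> h1 h2; rewrite /alpha (bigmax_sup S) // h1 h2. Qed.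

Lemma alpha_ex (A : {set V}) : exists S : {set V}, [/\ S \subset A, independent e S & #|S| = alpha e A].
Proof.
have h0 : 0 < #|(fun S : {set V} => (S \subset A) && independent e S)|.
  apply/card_gt0P; exists set0; apply/andP; split; first exact: sub0set.
  by apply/forallP => x; rewrite inE.
have [S HS Heq] := eq_bigmax_cond (fun S : {set V} => #|S|) h0.
exists S; move: HS => /andP[h1 h2]; split => //.
Qed.

Lemma indep_sub (S S' : {set V}) : S' \subset S -> independent e S -> independent e S'.
Proof.
move=> hs /forallP h; apply/forallP => x; apply/implyP => hx.
apply/forallP => y; apply/implyP => hy.
have := h x; rewrite (subsetP hs _ hx) /= => /forallP /(_ y).
by rewrite (subsetP hs _ hy).
Qed.

Lemma indepP (S : {set V}) : reflect (forall x y, x \in S -> y \in S -> ~~ e x y) (independent e S).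
Proof.
apply: (iffP forallP) => h.
  move=> x y hx hy; have := h x; rewrite hx /= => /forallP /(_ y); by rewrite hy.
move=> x; apply/implyP => hx; apply/forallP => y; apply/implyP => hy; exact: h.
Qed.

Lemma alpha_mono (A B : {set V}) : A \subset B -> alpha e A <= alpha e B.
Proof.
move=> hAB; have [S [h1 h2 <-]] := alpha_ex A.
by apply: alpha_ge => //; apply: subset_trans hAB.
Qed.

Lemma alpha_del (A : {set V}) v : alpha e A <= (alpha e (A :\ v)).+1.
Proof.
have [S [h1 h2 <-]] := alpha_ex A.
have h3 : #|S :\ v| <= alpha e (A :\ v).
  apply: alpha_ge; first by apply: setSD.
  by apply: indep_sub h2; apply: subsetDl.
have := cardsD1 v S; case: (v \in S) => /= ->; lia.
Qed.

Lemma alpha0 : alpha e set0 = 0.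
Proof.
have [S [h1 _ <-]] := alpha_ex set0.
by move: h1; rewrite subset0 => /eqP ->; rewrite cards0.
Qed.

Lemma alpha1 v : alpha e [set v] = 1.
Proof.
apply/eqP; rewrite eqn_leq; apply/andP; split.
  have [S [h1 _ <-]] := alpha_ex [set v].
  by rewrite -(cards1 v) subset_leq_card.
rewrite -(cards1 v); apply: alpha_ge => //.
apply/indepP => x y; rewrite !inE => /eqP -> /eqP ->; by rewrite eirr.
Qed.

Lemma cardsU_disjoint (A B : {set V}) : [disjoint A & B] -> #|A :|: B| = #|A| + #|B|.
Proof. by move=> h; rewrite cardsU (disjoint_setI0 h) cards0 subn0. Qed.

Lemma card_split (S X1 X2 : {set V}) : S \subset X1 :|: X2 -> [disjoint X1 & X2] ->
  #|S| = #|S :&: X1| + #|S :&: X2|.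
Proof.
move=> hS hd; rewrite -(cardsID X1 S); congr (_ + _); apply: eq_card => x.
rewrite !inE; case hx: (x \in S); rewrite /= ?andbF ?andbT //.
have := subsetP hS _ hx; rewrite inE; case h1: (x \in X1) => /= h2.
  by rewrite (disjointFr hd h1).
by rewrite h2.
Qed.

Lemma indepU (S1 S2 : {set V}) : independent e S1 -> independent e S2 ->
  (forall x y, x \in S1 -> y \in S2 -> ~~ e x y) -> independent e (S1 :|: S2).
Proof.
move=> /indepP h1 /indepP h2 h; apply/indepP => x y; rewrite !inE.
case/orP=> hx; case/orP=> hy; first exact: h1; first exact: h.
  by rewrite esym; apply: h.
exact: h2.
Qed.

Lemma alpha_join (X1 X2 : {set V}) r c : [disjoint X1 & X2] -> e r c ->
  (forall x y, x \in X1 -> y \in X2 -> e x y -> x = r /\ y = c) ->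
  alpha e (X1 :|: X2) = maxn (alpha e X1 + alpha e (X2 :\ c)) (alpha e (X1 :\ r) + alpha e X2).
Proof.
move=> hd erc hxe; apply/eqP; rewrite eqn_leq; apply/andP; split.
  have [S [h1 h2 <-]] := alpha_ex (X1 :|: X2).
  rewrite (card_split h1 hd).
  have i1 : independent e (S :&: X1) by apply: indep_sub h2; apply: subsetIl.
  have i2 : independent e (S :&: X2) by apply: indep_sub h2; apply: subsetIl.
  case hr: (r \in S); last first.
    rewrite leq_max; apply/orP; right; apply: leq_add; apply: alpha_ge => //.
      apply/subsetP => x; rewrite !inE => /andP[hxS hx1]; rewrite hx1 andbT.
      by apply/eqP => exr; rewrite exr hr in hxS.
    by apply: subsetIr.
  case hc: (c \in S).
    by move/indepP: h2 => /(_ r c hr hc); rewrite erc.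
  rewrite leq_max; apply/orP; left; apply: leq_add; apply: alpha_ge => //.
    by apply: subsetIr.
  apply/subsetP => x; rewrite !inE => /andP[hxS hx1]; rewrite hx1 andbT.
  by apply/eqP => exr; rewrite exr hc in hxS.
rewrite geq_max; apply/andP; split.
  have [S1 [h1 h2 <-]] := alpha_ex X1.
  have [S2 [h3 h4 <-]] := alpha_ex (X2 :\ c).
  have hd' : [disjoint S1 & S2].
    apply: (disjointW h1 _ hd); apply: subset_trans h3 _; apply: subsetDl.
  rewrite -cardsU_disjoint //; apply: alpha_ge.
    apply: setUSS => //; apply: subset_trans h3 _; apply: subsetDl.
  apply: indepU => // x y hx hy; apply/negP => exy.
  have hy' := subsetP h3 _ hy; move: hy'; rewrite !inE => /andP[ync hy2].
  have [_ yc] := hxe x y (subsetP h1 _ hx) hy2 exy.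
  by rewrite yc eqxx in ync.
have [S1 [h1 h2 <-]] := alpha_ex (X1 :\ r).
have [S2 [h3 h4 <-]] := alpha_ex X2.
have hd' : [disjoint S1 & S2].
  apply: (disjointW _ h3 hd); apply: subset_trans h1 _; apply: subsetDl.
rewrite -cardsU_disjoint //; apply: alpha_ge.
  apply: setUSS => //; apply: subset_trans h1 _; apply: subsetDl.
apply: indepU => // x y hx hy; apply/negP => exy.
have hx' := subsetP h1 _ hx; move: hx'; rewrite !inE => /andP[xnr hx1'].
have [xr _] := hxe x y hx1' (subsetP h3 _ hy) exy.
by rewrite xr eqxx in xnr.
Qed.

Lemma alpha_disj (X1 X2 : {set V}) : [disjoint X1 & X2] ->
  (forall x y, x \in X1 -> y \in X2 -> ~~ e x y) ->
  alpha e (X1 :|: X2) = alpha e X1 + alpha e X2.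
Proof.
move=> hd hxe; apply/eqP; rewrite eqn_leq; apply/andP; split.
  have [S [h1 h2 <-]] := alpha_ex (X1 :|: X2).
  rewrite (card_split h1 hd); apply: leq_add; apply: alpha_ge; try apply: subsetIr;
  by apply: indep_sub h2; apply: subsetIl.
have [S1 [h1 h2 <-]] := alpha_ex X1.
have [S2 [h3 h4 <-]] := alpha_ex X2.
have hd' : [disjoint S1 & S2] by exact: disjointW h1 h3 hd.
rewrite -cardsU_disjoint //; apply: alpha_ge; first by apply: setUSS.
apply: indepU => // x y hx hy; apply: hxe; [exact: subsetP h1 _ hx | exact: subsetP h3 _ hy].
Qed.

End G.


Section B.
Variable (V : finType) (e : rel V).
Hypothesis esym : symmetric e.
Hypothesis eirr : irreflexive e.

Definition critb (A : {set V}) v := (v \in A) && (alpha e A == (alpha e (A :\ v)).+1).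

Lemma critbP A v : reflect (alpha_critical e A v) (critb A v).
Proof.
rewrite /critb /alpha_critical; apply: (iffP andP) => [[h1 /eqP h2]|[h1 h2]]; by split => //; apply/eqP.
Qed.

Lemma setD1_notin (A : {set V}) v : v \notin A -> A :\ v = A.
Proof. by move=> h; apply/setDidPl; rewrite disjoint_sym disjoints1. Qed.

Lemma crit_join (X1 X2 : {set V}) r c : [disjoint X1 & X2] -> e r c ->
  (forall x y, x \in X1 -> y \in X2 -> e x y -> x = r /\ y = c) -> r \notin X2 ->
  alpha e (X1 :|: X2) + (critb X1 r && critb X2 c) = alpha e X1 + alpha e X2 /\
  critb (X1 :|: X2) r = critb X1 r && ~~ critb X2 c.
Proof.
move=> hd erc hx hr2.
have hA := alpha_join esym hd erc hx.
have hd' : [disjoint X1 :\ r & X2] by apply: disjointWl hd; apply: subsetDl.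
have hx' : forall x y, x \in X1 :\ r -> y \in X2 -> e x y -> x = r /\ y = c.
  by move=> x y; rewrite inE => /andP[_ h]; apply: hx.
have hB := alpha_join esym hd' erc hx'.
have e1 : (X1 :|: X2) :\ r = (X1 :\ r) :|: X2.
  by apply/setP => z; rewrite !inE; case: eqP => [->|]; rewrite ?(negbTE hr2) //.
have e2 : (X1 :\ r) :\ r = X1 :\ r by rewrite setD1_notin // !inE eqxx.
rewrite e2 in hB.
have l1 := alpha_del e X1 r; have l2 := alpha_del e X2 c.
have m1 : alpha e (X1 :\ r) <= alpha e X1 by apply: alpha_mono; apply: subsetDl.
have m2 : alpha e (X2 :\ c) <= alpha e X2 by apply: alpha_mono; apply: subsetDl.
have m3 : alpha e ((X1 :\ r) :\ r) <= alpha e (X1 :\ r) by rewrite e2.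
have z1 : r \notin X1 -> alpha e (X1 :\ r) = alpha e X1 by move=> h; rewrite setD1_notin.
have z2 : c \notin X2 -> alpha e (X2 :\ c) = alpha e X2 by move=> h; rewrite setD1_notin.
rewrite /critb e1 hB hA !inE (negbTE hr2) orbF.
have z1' := z1; have z2' := z2.
case h1: (r \in X1); case h2: (c \in X2) => /=.
- lia.
- have := z2' (negbT h2); lia.
- have := z1' (negbT h1); lia.
- have := z1' (negbT h1); have := z2' (negbT h2); lia.
Qed.

Lemma crit_disj (X1 X2 : {set V}) r : [disjoint X1 & X2] ->
  (forall x y, x \in X1 -> y \in X2 -> ~~ e x y) -> r \notin X2 ->
  alpha e (X1 :|: X2) = alpha e X1 + alpha e X2 /\
  critb (X1 :|: X2) r = critb X1 r.
Proof.
move=> hd hx hr2.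
have hA := alpha_disj esym hd hx.
have hd' : [disjoint X1 :\ r & X2] by apply: disjointWl hd; apply: subsetDl.
have hx' : forall x y, x \in X1 :\ r -> y \in X2 -> ~~ e x y.
  by move=> x y; rewrite inE => /andP[_ h]; apply: hx.
have hB := alpha_disj esym hd' hx'.
have e1 : (X1 :|: X2) :\ r = (X1 :\ r) :|: X2.
  by apply/setP => z; rewrite !inE; case: eqP => [->|]; rewrite ?(negbTE hr2) //.
split => //.
rewrite /critb e1 hB hA !inE (negbTE hr2) orbF.
case: (r \in X1) => //=; lia.
Qed.

End B.


Section C.
Variable (V : finType) (e : rel V).
Hypothesis esym : symmetric e.
Hypothesis eirr : irreflexive e.

Lemma acyclic_sub (A B : {set V}) : acyclic_on e B -> A \subset B -> acyclic_on e A.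
Proof.
move=> hB hAB s hs hc; apply: (hB s hs).
move: hc; rewrite /ucycle => /andP[h1 h2]; rewrite h2 andbT.
apply: (sub_cycle _ h1) => x y; rewrite /induced /= => /and3P[hx hy hxy].
by rewrite (subsetP hAB _ hx) (subsetP hAB _ hy).
Qed.

Lemma path_in (A : {set V}) x p : path (induced e A) x p -> all (fun y => y \in A) p.
Proof.
elim: p x => [|y p IH] x //=; rewrite {1}/induced /= => /andP[/and3P[_ hy _] hp].
by rewrite hy (IH y hp).
Qed.

Definition comp (F : {set V}) r c := [set x in F :\ r | connect (induced e (F :\ r)) c x].

Lemma comp_closed F r c x y : x \in comp F r c -> y \in F :\ r -> e x y -> y \in comp F r c.
Proof.
move=> hxC hy exy; move: hxC; rewrite /comp inE => /andP[hx hcx]; rewrite inE hy /=.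
apply: connect_trans hcx _; apply: connect1; by rewrite /induced /= hx hy exy.
Qed.

Lemma comp_unique F r c y : acyclic_on e F -> r \in F -> c \in F -> e r c ->
  y \in comp F r c -> e r y -> y = c.
Proof.
move=> hac hr hc erc; rewrite /comp inE => /andP[hy /connectP[p hp ylast]] ery.
apply/eqP; apply/negPn/negP => hyc.
case: (shortenP hp) ylast => p' hp' hu _ ylast.
have hp'nil : p' != [::] by case: p' hp' hu ylast => //= _ _ ye; rewrite ye eqxx in hyc.
have hcr : c \in F :\ r by rewrite !inE hc andbT; apply/eqP => cr; rewrite cr eirr in erc.
apply: (hac (r :: c :: p')).
  by case: p' hp'nil {hp' hu ylast} => //= a l _.
rewrite /ucycle /=; apply/andP; split.
  rewrite rcons_path; apply/and3P; split.
  - by rewrite /induced /= hr hc erc.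
  - apply: sub_path hp' => a b; rewrite /induced /= !inE => /and3P[/andP[_ ->] /andP[_ ->] ->].
    done.
  - rewrite -ylast /induced /= hr esym ery andbT.
    by move: hy; rewrite inE => /andP[_ ->].
move: hu => /= /andP[-> ->]; rewrite !andbT inE negb_or; apply/andP; split.
  by apply/eqP => rc; rewrite rc eirr in erc.
apply/negP => hrp; have := allP (path_in hp') r hrp; by rewrite !inE eqxx.
Qed.

End C.


Definition ty := (bool * nat * bool * seq bool * seq bool)%type.
Definition dec (i : nat) : nat * bool := (i./2, odd i).
Definition cands (z : nat) : seq nat := if z < 2 then [:: z] else [:: 2; 3; 4].
Definition vals (s : seq bool) n := [seq dec j | j <- iota 0 n & nth false s j].
Definition flags n (L : seq (nat * bool)) := [seq dec i \in L | i <- iota 0 n].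
Definition combe (k0 : bool) (a b : nat * bool) : nat * bool :=
  (a.1 + b.1 + (a.2 && b.2) - k0, a.2 && ~~ b.2).
Definition combd (a b : nat * bool) : nat * bool := (a.1 + b.1, a.2).

Definition compose_gen (cb : nat * bool -> nat * bool -> nat * bool) (t1 t2 : ty) : seq ty :=
  let: (d1, z1, dz1, s11, s21) := t1 in
  let: (d2, z2, dz2, s12, s22) := t2 in
  let L1 := [seq cb v (0, d2) | v <- vals s11 4] ++ [seq cb (0, d1) v | v <- vals s12 4] in
  let L2 := [seq cb v (0, d2) | v <- vals s21 6] ++ [seq cb (0, d1) v | v <- vals s22 6]
            ++ [seq cb v w | v <- vals s11 4, w <- vals s12 4] in
  [seq ((cb (0, d1) (0, d2)).2, minn (cb (a, dz1) (b, dz2)).1 2, (cb (a, dz1) (b, dz2)).2,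
        flags 4 L1, flags 6 L2) | a <- cands z1, b <- cands z2].

Definition compose_e (t1 t2 : ty) := compose_gen (combe (t1.1.1.1.1 && t2.1.1.1.1)) t1 t2.
Definition compose_d (t1 t2 : ty) := compose_gen combd t1 t2.

Lemma cands_ok n : minn n 4 \in cands (minn n 2).
Proof.
rewrite /cands; case: n => [|[|[|[|n]]]] //.
Qed.

Lemma flagsP n L i : nth false (flags n L) i -> dec i \in L.
Proof.
rewrite /flags; case: (ltnP i n) => h.
  by rewrite (nth_map 0) ?size_iota // nth_iota.
by rewrite nth_default // size_map size_iota.
Qed.

Lemma valsP s n v : v \in vals s n -> exists j, nth false s j /\ v = dec j.
Proof. by case/mapP => j; rewrite mem_filter => /andP[h _] ->; exists j. Qed.

Section D.
Variable (V : finType) (e : rel V).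
Hypothesis esym : symmetric e.
Hypothesis eirr : irreflexive e.
Variable Z : {set V}.

Definition F1 (T : {set V}) r (px : nat * bool) :=
  exists u, u \in Z :&: T /\ (alpha e T - alpha e (T :\ u), critb e (T :\ u) r) = px.
Definition F2 (T : {set V}) r (px : nat * bool) :=
  exists u v, [/\ u \in Z :&: T, v \in Z :&: T &
     (alpha e T - alpha e (T :\: [set u; v]), critb e (T :\: [set u; v]) r) = px].

Definition abs (T : {set V}) r (t : ty) : Prop :=
  let: (d0, z, dz, s1, s2) := t in
  [/\ d0 = critb e T r, z = minn (alpha e T - alpha e (T :\: Z)) 2, dz = critb e (T :\: Z) r,
      (forall i, nth false s1 i -> F1 T r (dec i)) &
      (forall i, nth false s2 i -> F2 T r (dec i))].

Lemma setD2l (A : {set V}) u v : v \notin A -> A :\: [set u; v] = A :\ u.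
Proof.
move=> h; apply/setP => x; rewrite !inE.
by case: (x =P v) => [->|_]; rewrite ?(negbTE h) ?andbF ?orbF.
Qed.
Lemma setD2r (A : {set V}) u v : u \notin A -> A :\: [set u; v] = A :\ v.
Proof.
move=> h; apply/setP => x; rewrite !inE.
by case: (x =P u) => [->|_]; rewrite ?(negbTE h) ?andbF ?orbF.
Qed.
Lemma setD2n (A : {set V}) u v : u \notin A -> v \notin A -> A :\: [set u; v] = A.
Proof. by move=> h1 h2; rewrite setD2l // setD1_notin. Qed.

Lemma compose_sound (cb : nat * bool -> nat * bool -> nat * bool)
  (T1 T2 F : {set V}) r1 r2 t1 t2 :
  [disjoint T1 & T2] -> F = T1 :|: T2 ->
  (forall Y, (alpha e F - alpha e (F :\: Y), critb e (F :\: Y) r1) =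
     cb (alpha e T1 - alpha e (T1 :\: Y), critb e (T1 :\: Y) r1)
        (alpha e T2 - alpha e (T2 :\: Y), critb e (T2 :\: Y) r2)) ->
  (forall p q x y, minn (cb (p, x) (q, y)).1 2 = minn (cb (minn p 4, x) (minn q 4, y)).1 2) ->
  (forall p q p' q' x y, (cb (p, x) (q, y)).2 = (cb (p', x) (q', y)).2) ->
  abs T1 r1 t1 -> abs T2 r2 t2 -> exists2 t, t \in compose_gen cb t1 t2 & abs F r1 t.
Proof.
move=> hd hF core cap ind.
case: t1 => [[[[d1 z1] dz1] s11] s21]; case: t2 => [[[[d2 z2] dz2] s12] s22].
move=> [hd1 hz1 hdz1 hs11 hs21] [hd2 hz2 hdz2 hs12 hs22].
set a := minn (alpha e T1 - alpha e (T1 :\: Z)) 4.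
set b := minn (alpha e T2 - alpha e (T2 :\: Z)) 4.
have ha : a \in cands z1 by rewrite hz1 cands_ok.
have hb : b \in cands z2 by rewrite hz2 cands_ok.
have c0 := core set0; rewrite !setD0 !subnn -hd1 -hd2 in c0.
have cZ := core Z; rewrite -hdz1 -hdz2 in cZ.
have inF1 u : u \in Z :&: T1 -> u \in Z :&: F /\ u \notin T2.
  rewrite hF !inE => /andP[hz h]; rewrite hz h /=; split => //; by rewrite (disjointFr hd h).
have inF2 u : u \in Z :&: T2 -> u \in Z :&: F /\ u \notin T1.
  rewrite hF !inE => /andP[hz h]; rewrite hz h orbT /=; split => //; by rewrite (disjointFl hd h).
eexists.
  apply/allpairsP; exists (a, b); split; [exact: ha | exact: hb | reflexivity].
split.
- by rewrite -c0.
- by rewrite -cap -cZ.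
- by rewrite (ind _ _ (alpha e T1 - alpha e (T1 :\: Z)) (alpha e T2 - alpha e (T2 :\: Z))) -cZ.
- move=> i /flagsP; rewrite mem_cat => /orP[] /mapP[v /valsP[j [hj ->]] ->].
  + have [u [hu hv]] := hs11 j hj; have [hu' hu2] := inF1 u hu.
    exists u; split => //; rewrite core -hv (setD1_notin hu2) subnn.
    by rewrite hd2.
  + have [u [hu hv]] := hs12 j hj; have [hu' hu2] := inF2 u hu.
    exists u; split => //; rewrite core -hv (setD1_notin hu2) subnn.
    by rewrite hd1.
- move=> i /flagsP; rewrite !mem_cat => /or3P[] .
  + case/mapP => v /valsP[j [hj ->]] ->.
    have [u [w [hu hw hv]]] := hs21 j hj; have [hu' hu2] := inF1 u hu; have [hw' hw2] := inF1 w hw.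
    exists u, w; split => //; rewrite core -hv (setD2n hu2 hw2) subnn.
    by rewrite hd2.
  + case/mapP => v /valsP[j [hj ->]] ->.
    have [u [w [hu hw hv]]] := hs22 j hj; have [hu' hu2] := inF2 u hu; have [hw' hw2] := inF2 w hw.
    exists u, w; split => //; rewrite core -hv (setD2n hu2 hw2) subnn.
    by rewrite hd1.
  + case/allpairsP => [[v w]] /= [/valsP[j [hj ->]] /valsP[k [hk ->]] ->].
    have [u [hu hv]] := hs11 j hj; have [hu' hu2] := inF1 u hu.
    have [x [hx hw]] := hs12 k hk; have [hx' hx2] := inF2 x hx.
    exists u, x; split => //; rewrite core (setD2l _ hx2) (setD2r _ hu2) hv hw.
    done.
Qed.

End D.


Definition Pl : seq ty :=
[:: (false,0,false,[::false;false;false;false],[::false;false;false;false;false;false]);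
 (false,0,false,[::true;false;false;false],[::true;false;false;false;false;false]);
 (false,0,true,[::false;true;false;false],[::false;true;false;false;false;false]);
 (false,0,true,[::true;true;false;false],[::true;true;false;false;false;false]);
 (false,1,false,[::false;false;true;false],[::false;false;true;false;false;false]);
 (false,1,false,[::false;false;true;false],[::false;false;true;false;true;false]);
 (false,1,false,[::true;false;false;false],[::true;false;true;false;false;false]);
 (false,1,false,[::true;false;true;false],[::true;false;true;false;false;false]);
 (false,1,false,[::true;false;true;false],[::true;false;true;false;true;false]);
 (false,1,false,[::true;true;false;false],[::true;true;true;false;false;false]);
 (false,1,true,[::false;false;true;false],[::false;false;true;false;true;false]);
 (false,1,true,[::false;false;true;false],[::false;false;true;true;false;false]);
 (false,1,true,[::false;false;true;false],[::false;false;true;true;true;false]);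
 (false,1,true,[::false;true;true;false],[::false;true;true;true;false;false]);
 (false,1,true,[::false;true;true;false],[::false;true;true;true;true;false]);
 (false,1,true,[::true;false;true;false],[::true;false;true;false;true;false]);
 (false,1,true,[::true;false;true;false],[::true;false;true;true;false;false]);
 (false,1,true,[::true;false;true;false],[::true;false;true;true;true;false]);
 (false,1,true,[::true;true;false;false],[::true;true;true;false;false;false]);
 (false,1,true,[::true;true;true;false],[::true;true;true;true;false;false]);
 (false,1,true,[::true;true;true;false],[::true;true;true;true;true;false]);
 (false,2,false,[::false;false;true;false],[::false;false;true;false;false;false]);
 (false,2,false,[::false;false;true;false],[::false;false;true;false;true;false]);
 (false,2,false,[::false;false;true;false],[::false;false;true;true;true;false]);
 (false,2,false,[::false;true;true;false],[::false;true;true;true;false;false]);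
 (false,2,false,[::false;true;true;false],[::false;true;true;true;true;false]);
 (false,2,false,[::true;false;false;false],[::true;false;true;false;false;false]);
 (false,2,false,[::true;false;true;false],[::true;false;true;false;false;false]);
 (false,2,false,[::true;false;true;false],[::true;false;true;false;true;false]);
 (false,2,false,[::true;false;true;false],[::true;false;true;true;false;false]);
 (false,2,false,[::true;false;true;false],[::true;false;true;true;true;false]);
 (false,2,false,[::true;true;false;false],[::true;true;true;false;false;false]);
 (false,2,false,[::true;true;true;false],[::true;true;true;true;false;false]);
 (false,2,false,[::true;true;true;false],[::true;true;true;true;true;false]);
 (false,2,true,[::false;false;true;false],[::false;false;true;false;true;false]);
 (false,2,true,[::false;false;true;false],[::false;false;true;true;false;false]);
 (false,2,true,[::false;false;true;false],[::false;false;true;true;true;false]);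
 (false,2,true,[::false;true;true;false],[::false;true;true;true;false;false]);
 (false,2,true,[::false;true;true;false],[::false;true;true;true;true;false]);
 (false,2,true,[::true;false;true;false],[::true;false;true;false;true;false]);
 (false,2,true,[::true;false;true;false],[::true;false;true;true;false;false]);
 (false,2,true,[::true;false;true;false],[::true;false;true;true;true;false]);
 (false,2,true,[::true;true;false;false],[::true;true;true;false;false;false]);
 (false,2,true,[::true;true;true;false],[::true;true;true;true;false;false]);
 (false,2,true,[::true;true;true;false],[::true;true;true;true;true;false]);
 (true,0,true,[::false;false;false;false],[::false;false;false;false;false;false]);
 (true,0,true,[::false;true;false;false],[::false;true;false;false;false;false]);
 (true,1,false,[::false;false;true;false],[::false;false;true;false;false;false]);
 (true,1,false,[::false;true;true;false],[::false;true;true;false;false;false]);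
 (true,1,true,[::false;false;false;true],[::false;false;false;true;false;false]);
 (true,1,true,[::false;false;false;true],[::false;false;false;true;false;true]);
 (true,1,true,[::false;true;false;false],[::false;true;false;true;false;false]);
 (true,1,true,[::false;true;false;true],[::false;true;false;true;false;false]);
 (true,1,true,[::false;true;false;true],[::false;true;false;true;false;true]);
 (true,1,true,[::false;true;true;false],[::false;true;true;true;false;false]);
 (true,2,false,[::false;false;false;true],[::false;false;false;true;false;true]);
 (true,2,false,[::false;false;false;true],[::false;false;false;true;true;false]);
 (true,2,false,[::false;false;false;true],[::false;false;false;true;true;true]);
 (true,2,false,[::false;false;true;true],[::false;false;true;true;true;false]);
 (true,2,false,[::false;false;true;true],[::false;false;true;true;true;true]);
 (true,2,false,[::false;true;false;true],[::false;true;false;true;false;true]);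
 (true,2,false,[::false;true;false;true],[::false;true;false;true;true;false]);
 (true,2,false,[::false;true;false;true],[::false;true;false;true;true;true]);
 (true,2,false,[::false;true;true;false],[::false;true;true;true;false;false]);
 (true,2,false,[::false;true;true;true],[::false;true;true;true;true;false]);
 (true,2,false,[::false;true;true;true],[::false;true;true;true;true;true]);
 (true,2,true,[::false;false;false;true],[::false;false;false;true;false;false]);
 (true,2,true,[::false;false;false;true],[::false;false;false;true;false;true]);
 (true,2,true,[::false;false;false;true],[::false;false;false;true;true;true]);
 (true,2,true,[::false;false;true;true],[::false;false;true;true;true;false]);
 (true,2,true,[::false;false;true;true],[::false;false;true;true;true;true]);
 (true,2,true,[::false;true;false;false],[::false;true;false;true;false;false]);
 (true,2,true,[::false;true;false;true],[::false;true;false;true;false;false]);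
 (true,2,true,[::false;true;false;true],[::false;true;false;true;false;true]);
 (true,2,true,[::false;true;false;true],[::false;true;false;true;true;false]);
 (true,2,true,[::false;true;false;true],[::false;true;false;true;true;true]);
 (true,2,true,[::false;true;true;false],[::false;true;true;true;false;false]);
 (true,2,true,[::false;true;true;true],[::false;true;true;true;true;false]);
 (true,2,true,[::false;true;true;true],[::false;true;true;true;true;true])].

Definition base_ty (b : bool) : ty :=
  if b then (true, 1, false, [:: false; false; true; false], [:: false; false; true; false; false; false])
  else (true, 0, true, [:: false; false; false; false], [:: false; false; false; false; false; false]).

Lemma closed_e : all (fun t1 => all (fun t2 => all (fun t => t \in Pl) (compose_e t1 t2)) Pl) Pl.
Proof. vm_compute. reflexivity. Qed.

Lemma closed_d : all (fun b => all (fun t => all (fun t' => t' \in Pl) (compose_d (base_ty b) t)) Pl) [:: true; false].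
Proof. vm_compute. reflexivity. Qed.

Lemma base_in b : base_ty b \in Pl.
Proof. by case: b; vm_compute. Qed.

Definition propty (t : ty) : bool :=
  let: (d0, z, dz, s1, s2) := t in
  (d0 && (1 <= z) ==> [|| nth false s1 2, nth false s1 3, nth false s2 3 | nth false s2 5]) &&
  ((z == 0) && dz && ~~ d0 ==> nth false s1 1 || nth false s1 3).

Lemma props : all propty Pl.
Proof. vm_compute. reflexivity. Qed.


Section F.
Variable (V : finType) (e : rel V).
Hypothesis esym : symmetric e.
Hypothesis eirr : irreflexive e.
Variable Z : {set V}.

Lemma critb1 r : critb e [set r] r.
Proof. by rewrite /critb inE eqxx setDv alpha0 alpha1. Qed.

Lemma critb0 r : critb e set0 r = false.
Proof. by rewrite /critb inE. Qed.

Lemma base_abs r : abs e Z [set r] r (base_ty (r \in Z)).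
Proof.
have hD : [set r] :\ r = set0 :> {set V}.
  by apply/setP => x; rewrite !inE; case: (x =P r).
have hD2 : [set r] :\: [set r; r] = set0 :> {set V} by rewrite setUid.
case hr: (r \in Z) => /=.
- have h0 : [set r] :\: Z = set0.
    by apply/setP => x; rewrite !inE; case: (x =P r) => [->|_]; rewrite ?hr ?andbF.
  split.
  + by rewrite critb1.
  + by rewrite h0 alpha0 (alpha1 eirr).
  + by rewrite h0 critb0.
  + move=> [|[|[|[|i]]]] //=; last by rewrite nth_nil.
    by move=> _; exists r; rewrite !inE hr eqxx hD alpha0 (alpha1 eirr) critb0.
  + move=> [|[|[|[|[|[|i]]]]]] //=; last by rewrite nth_nil.
    by move=> _; exists r, r; rewrite !inE hr eqxx hD2 alpha0 (alpha1 eirr) critb0.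
- have h0 : [set r] :\: Z = [set r].
    by apply/setP => x; rewrite !inE; case: (x =P r) => [->|_]; rewrite ?hr ?andbF.
  split.
  + by rewrite critb1.
  + by rewrite h0 subnn.
  + by rewrite h0 critb1.
  + by case=> [|[|[|[|i]]]] //=; rewrite nth_nil.
  + by case=> [|[|[|[|[|[|i]]]]]] //=; rewrite nth_nil.
Qed.

Lemma mono_D (A Y : {set V}) : alpha e (A :\: Y) <= alpha e A.
Proof. by apply: alpha_mono; apply: subsetDl. Qed.

Lemma join_gen (F C : {set V}) (r c : V) (Y : {set V}) :
  C \subset F -> r \notin C -> e r c -> (forall y, y \in C -> e r y -> y = c) ->
  (forall x y, y \in C -> x \in F :\ r -> e y x -> x \in C) ->
  alpha e (F :\: Y) + (critb e ((F :\: C) :\: Y) r && critb e (C :\: Y) c) =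
    alpha e ((F :\: C) :\: Y) + alpha e (C :\: Y) /\
  critb e (F :\: Y) r = critb e ((F :\: C) :\: Y) r && ~~ critb e (C :\: Y) c.
Proof.
move=> hCF hrC erc huniq hclos.
have eF : F :\: Y = ((F :\: C) :\: Y) :|: (C :\: Y).
  apply/setP => x; rewrite !inE; case hx: (x \in C); rewrite /= ?andbT ?andbF ?orbF //.
  by rewrite (subsetP hCF _ hx) andbT orFb.
rewrite eF; apply: crit_join => //.
- rewrite -setI_eq0; apply/eqP/setP => x; rewrite !inE; by case: (x \in C); rewrite ?andbF.
- move=> x y; rewrite !inE => /andP[_ /andP[hxC hxF]] /andP[_ hyC] exy.
  case: (x =P r) => [xr|xnr].
    by split => //; apply: huniq => //; rewrite -xr.
  have : x \in C.
    apply: (hclos x y hyC); first by rewrite !inE hxF andbT; apply/eqP.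
    by rewrite esym.
  by rewrite (negbTE hxC).
- by rewrite !inE (negbTE hrC) andbF.
Qed.

Lemma comp_facts (F : {set V}) (r c : V) : acyclic_on e F -> r \in F -> c \in F -> e r c ->
  [/\ comp e F r c \subset F, r \notin comp e F r c, c \in comp e F r c,
      (forall y, y \in comp e F r c -> e r y -> y = c) &
      (forall x y, y \in comp e F r c -> x \in F :\ r -> e y x -> x \in comp e F r c)].
Proof.
move=> hac hr hc erc; split.
- by apply/subsetP => x; rewrite /comp !inE => /andP[/andP[_ ->]].
- by rewrite /comp !inE eqxx.
- rewrite /comp !inE hc andbT connect0 andbT; apply/eqP => cr; by rewrite cr eirr in erc.
- by move=> y; apply: comp_unique.
- by move=> x y hy hx eyx; apply: (comp_closed hy hx eyx).
Qed.

Lemma join_facts (F : {set V}) (r c : V) (Y : {set V}) : acyclic_on e F -> r \in F -> c \in F -> e r c ->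
  alpha e (F :\: Y) + (critb e ((F :\: comp e F r c) :\: Y) r && critb e (comp e F r c :\: Y) c) =
    alpha e ((F :\: comp e F r c) :\: Y) + alpha e (comp e F r c :\: Y) /\
  critb e (F :\: Y) r = critb e ((F :\: comp e F r c) :\: Y) r && ~~ critb e (comp e F r c :\: Y) c.
Proof.
move=> hac hr hc erc; have [h1 h2 _ h4 h5] := comp_facts hac hr hc erc.
exact: join_gen.
Qed.

Lemma core_e (F : {set V}) (r c : V) (Y : {set V}) : acyclic_on e F -> r \in F -> c \in F -> e r c ->
  (alpha e F - alpha e (F :\: Y), critb e (F :\: Y) r) =
  combe (critb e (F :\: comp e F r c) r && critb e (comp e F r c) c)
    (alpha e (F :\: comp e F r c) - alpha e ((F :\: comp e F r c) :\: Y), critb e ((F :\: comp e F r c) :\: Y) r)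
    (alpha e (comp e F r c) - alpha e (comp e F r c :\: Y), critb e (comp e F r c :\: Y) c).
Proof.
move=> hac hr hc erc.
have [j0a j0b] := join_facts set0 hac hr hc erc; rewrite !setD0 in j0a j0b.
have [jYa jYb] := join_facts Y hac hr hc erc.
have m1 := mono_D F Y; have m2 := mono_D (F :\: comp e F r c) Y; have m3 := mono_D (comp e F r c) Y.
rewrite /combe /= jYb; congr (_, _); lia.
Qed.

Lemma disj_facts (F : {set V}) (r : V) (Y : {set V}) : r \in F -> (forall y, y \in F -> e r y = false) ->
  alpha e (F :\: Y) = alpha e ([set r] :\: Y) + alpha e ((F :\ r) :\: Y) /\
  critb e (F :\: Y) r = critb e ([set r] :\: Y) r.
Proof.
move=> hr hno.
have eF : F :\: Y = ([set r] :\: Y) :|: ((F :\ r) :\: Y).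
  apply/setP => x; rewrite !inE; case: (x =P r) => [->|_]; rewrite ?hr ?andbT ?andbF ?orbF //=.
rewrite eF; apply: crit_disj => //.
- rewrite -setI_eq0; apply/eqP/setP => x; rewrite !inE; case: (x =P r); rewrite ?andbF //.
- move=> x y; rewrite !inE => /andP[_ /eqP ->] /andP[_ /andP[_ hy]]; by rewrite hno.
- by rewrite !inE eqxx andbF.
Qed.

Lemma core_d (F : {set V}) (r : V) (Y : {set V}) (r2 : V) : r \in F -> (forall y, y \in F -> e r y = false) ->
  (alpha e F - alpha e (F :\: Y), critb e (F :\: Y) r) =
  combd (alpha e [set r] - alpha e ([set r] :\: Y), critb e ([set r] :\: Y) r)
        (alpha e (F :\ r) - alpha e ((F :\ r) :\: Y), critb e ((F :\ r) :\: Y) r2).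
Proof.
move=> hr hno.
have [j0a j0b] := disj_facts set0 hr hno; rewrite !setD0 in j0a j0b.
have [jYa jYb] := disj_facts Y hr hno.
have m1 := mono_D F Y; have m2 := mono_D [set r] Y; have m3 := mono_D (F :\ r) Y.
rewrite /combd /= jYb; congr (_, _); lia.
Qed.

Lemma cap_e (k : bool) p q x y : minn (combe k (p, x) (q, y)).1 2 =
      minn (combe k (minn p 4, x) (minn q 4, y)).1 2.
Proof. rewrite /combe /=; lia. Qed.

Lemma cap_d p q (x y : bool) : minn (combd (p, x) (q, y)).1 2 =
      minn (combd (minn p 4, x) (minn q 4, y)).1 2.
Proof. rewrite /combd /=; lia. Qed.

Lemma disjD (A B : {set V}) : [disjoint A :\: B & B].
Proof. by rewrite -setI_eq0; apply/eqP/setP => x; rewrite !inE; case: (x \in B); rewrite ?andbF. Qed.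

Lemma setDUK (A B : {set V}) : B \subset A -> A = (A :\: B) :|: B.
Proof.
move=> h; apply/setP => x; rewrite !inE; case hx: (x \in B); rewrite ?orbT ?orbF //=.
by rewrite (subsetP h _ hx).
Qed.

Lemma disj1 (A : {set V}) r : [disjoint [set r] & A :\ r].
Proof. by rewrite disjoints1 !inE eqxx. Qed.

Lemma esym_setD1K (A : {set V}) r : r \in A -> A = [set r] :|: (A :\ r).
Proof. by move=> h; rewrite setD1K. Qed.

Lemma main n : forall (F : {set V}) (r : V), #|F| <= n -> acyclic_on e F -> r \in F ->
  exists2 t, t \in Pl & abs e Z F r t.
Proof.
elim: n => [|n IH] F r hn hac hr.
  by move: hn; rewrite leqn0 cards_eq0 => /eqP F0; rewrite F0 inE in hr.
case: (pickP (fun c => (c \in F) && e r c)) => [c /andP[hc erc] | hno].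
- set C := comp e F r c.
  have hCF : C \subset F by apply/subsetP => x; rewrite /C /comp !inE => /andP[/andP[_ ->]].
  have hrC : r \notin C by rewrite /C /comp !inE eqxx.
  have hcC : c \in C.
    rewrite /C /comp !inE hc andbT connect0 andbT; apply/eqP => cr; by rewrite cr eirr in erc.
  have hr1 : r \in F :\: C by rewrite inE hr hrC.
  have cC : #|C| <= n.
    have : #|C| < #|F| by apply: proper_card; apply/properP; split => //; exists r.
    lia.
  have cT : #|F :\: C| <= n.
    have : #|F :\: C| < #|F|.
      apply: proper_card; apply/properP; split; first exact: subsetDl.
      by exists c; rewrite // inE hcC.
    lia.
  have [t1 ht1P ht1] := IH (F :\: C) r cT (acyclic_sub hac (subsetDl _ _)) hr1.
  have [t2 ht2P ht2] := IH C c cC (acyclic_sub hac hCF) hcC.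
  have hd1 : t1.1.1.1.1 = critb e (F :\: C) r.
    by move: ht1; case: t1 {ht1P} => [[[[? ?] ?] ?] ?] [].
  have hd2 : t2.1.1.1.1 = critb e C c.
    by move: ht2; case: t2 {ht2P} => [[[[? ?] ?] ?] ?] [].
  have hcore : forall Y, (alpha e F - alpha e (F :\: Y), critb e (F :\: Y) r) =
     combe (t1.1.1.1.1 && t2.1.1.1.1)
       (alpha e (F :\: C) - alpha e ((F :\: C) :\: Y), critb e ((F :\: C) :\: Y) r)
       (alpha e C - alpha e (C :\: Y), critb e (C :\: Y) c).
    by move=> Y; rewrite hd1 hd2; apply: core_e.
  have hcap : forall p q x y, minn (combe (t1.1.1.1.1 && t2.1.1.1.1) (p, x) (q, y)).1 2 =
      minn (combe (t1.1.1.1.1 && t2.1.1.1.1) (minn p 4, x) (minn q 4, y)).1 2.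
    by move=> p q x y; apply: cap_e.
  have [t ht htabs] := @compose_sound V e Z (combe (t1.1.1.1.1 && t2.1.1.1.1))
     (F :\: C) C F r c t1 t2 (disjD F C) (setDUK hCF) hcore hcap (fun _ _ _ _ _ _ => erefl) ht1 ht2.
  exists t => //.
  have := allP closed_e t1 ht1P => /allP /(_ t2 ht2P) /allP; exact.
- have hno' : forall y, y \in F -> e r y = false.
    by move=> y hy; have := hno y; rewrite /= hy.
  case: (set_0Vmem (F :\ r)) => [h0 | [r2 hr2]].
    have hF1 : F = [set r].
      apply/setP => x; rewrite inE; case: (x =P r) => [->|/eqP xr]; first by rewrite hr.
      apply/negbTE/negP => hx.
      have : x \in F :\ r by rewrite !inE xr hx.
      by rewrite h0 inE.
    exists (base_ty (r \in Z)); first exact: base_in.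
    rewrite hF1; exact: base_abs.
  have cT : #|F :\ r| <= n.
    have := cardsD1 r F; rewrite hr /=; lia.
  have hac2 : acyclic_on e (F :\ r) by apply: acyclic_sub hac (subsetDl _ _).
  have [t2 ht2P ht2] := IH (F :\ r) r2 cT hac2 hr2.
  have hcore : forall Y, (alpha e F - alpha e (F :\: Y), critb e (F :\: Y) r) =
     combd (alpha e [set r] - alpha e ([set r] :\: Y), critb e ([set r] :\: Y) r)
       (alpha e (F :\ r) - alpha e ((F :\ r) :\: Y), critb e ((F :\ r) :\: Y) r2).
    by move=> Y; apply: core_d.
  have hcap : forall p q x y, minn (combd (p, x) (q, y)).1 2 =
      minn (combd (minn p 4, x) (minn q 4, y)).1 2.
    by move=> p q x y; apply: cap_d.
  have [t ht htabs] := @compose_sound V e Z combd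
     [set r] (F :\ r) F r r2 (base_ty (r \in Z)) t2 (disj1 F r) (esym_setD1K hr) hcore hcap
     (fun _ _ _ _ _ _ => erefl) (base_abs r) ht2.
  exists t => //.
  have hb : (r \in Z) \in [:: true; false] by case: (r \in Z).
  have := allP closed_d _ hb => /allP /(_ t2 ht2P) /allP; exact.
Qed.

End F.

Unset Implicit Arguments.

Theorem lemma8 (V : finType) (e : rel V) (T Z : {set V}) (r : V) :
  simple_graph e -> is_tree e T -> r \in T ->
  (alpha e T > alpha e (T :\: Z) -> alpha_critical e T r ->
     (exists u v, [/\ u \in Z :&: T, v \in Z :&: T,
                     alpha e T > alpha e (T :\: [set u; v]) &
                     alpha_critical e (T :\: [set u; v]) r])
     \/
     (exists u, [/\ u \in Z :&: T, alpha e T > alpha e (T :\ u) &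
                    ~ alpha_critical e (T :\ u) r]))
  /\
  (alpha e T = alpha e (T :\: Z) -> alpha_critical e (T :\: Z) r ->
     ~ alpha_critical e T r ->
     exists u, u \in Z :&: T /\ alpha_critical e (T :\ u) r).
Proof.
move=> [esym eirr] [_ [_ hac]] hr.
have [t htP habs] := @main V e esym eirr Z #|T| T r (leqnn _) hac hr.
have hp := allP props t htP.
move: habs hp; case: t {htP} => [[[[d0 z] dz] s1] s2] [hd0 hz hdz hs1 hs2] /= /andP[pa pb].
split.
- move=> hlt /critbP hcr.
  have hz1 : 0 < z by rewrite hz; move: hlt; lia.
  rewrite hd0 hcr hz1 /= in pa.
  case/or4P: pa => h.
  + have [u [hu]] := hs1 2 h; rewrite /dec /= => -[h1 h2].
    right; exists u; split => //; first lia.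
    by move/critbP; rewrite h2.
  + have [u [hu]] := hs1 3 h; rewrite /dec /= => -[h1 h2].
    left; exists u, u; rewrite setUid; split => //; first lia.
    by apply/critbP.
  + have [u [v [hu hv]]] := hs2 3 h; rewrite /dec /= => -[h1 h2].
    left; exists u, v; split => //; first lia.
    by apply/critbP.
  + have [u [v [hu hv]]] := hs2 5 h; rewrite /dec /= => -[h1 h2].
    left; exists u, v; split => //; first lia.
    by apply/critbP.
- move=> heq /critbP hcz hncr.
  have hc0 : critb e T r = false by apply/negbTE/negP => /critbP.
  have hz0 : z = 0 by rewrite hz -heq subnn.
  rewrite hz0 hdz hcz hd0 hc0 /= in pb.
  case/orP: pb => h.
  + have [u [hu]] := hs1 1 h; rewrite /dec /= => -[h1 h2].
    by exists u; split => //; apply/critbP.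
  + have [u [hu]] := hs1 3 h; rewrite /dec /= => -[h1 h2].
    by exists u; split => //; apply/critbP.
Qed.
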